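(* Let $\widehat\pi$ be the policy computed by ALG-CE under the good event $E$. Then $$\sum_{i\in[k]}P_{(\widehat\pi(0),i)}\mathbb{E}[R_i\mid\widehat\pi(i)]\ge\sum_{i\in[k]}\widehat P_{(\widehat\pi(0),i)}\widehat{\mathcal{R}}_{(\widehat\pi(i),i)}-O\left(\sqrt{\max\left\{\widehat\lambda,\frac{m_0}{p_+}\right\}\frac{\log(NT)}{T}}\right),$$ where $\widehat\lambda=\|\widehat P\widehat M^{1/2}(\widehat P^\top\widehat f^* )^{\circ-1/2}\|_\infty^2$.
   Context: Two-stage causal MDP. Start state $0$, intermediate states $[k]$, terminal state. At each state $i\in\{0,\dots,k\}$: independent Bernoulli variables $X^i_1,\dots,X^i_n$, $q^i_j=\mathbb{P}\{X^i_j=1\}$ unknown; atomic interventions $\mathcal{I}_i=\{do()\}\cup\{do(X^i_j=0),do(X^i_j=1):j\in[n]\}$, $N=2n+1$ ($do(X^i_j=x)$ sets $X^i_j=x$, other variables drawn independently). Performing $a\in\mathcal{I}_0$ at state $0$ leads to $i\in[k]$ with unknown probability $P_{(a,i)}$ (depending stochastically on the realized $X^0$-values); $P\in\mathbb{R}^{N\times k}$, $p_+=\min\{P_{(a,i)}>0\}$. At state $i\in[k]$, after an intervention all $X^i_j$ and a reward $R_i\in\{0,1\}$ (law depending on the $X^i$-values) are observed; $\mathbb{E}[R_i\mid a]$ is the expected reward under $a\in\mathcal{I}_i$. Causal parameters: with $\bar q^i_j=\min(q^i_j,1-q^i_j)$ sorted as $\bar q^i_{(1)}\le\dots\le\bar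 q^i_{(n)}$, $m_i=\max\{j:\bar q^i_{(j)}<1/j\}$; $\mathcal{I}_{m_i}$ is the set of interventions setting a variable with $\bar q^i_{(j)}<1/j$ to its less likely value; $M=\mathrm{diag}(m_1,\dots,m_k)$. Frequency vectors: $f\in\mathbb{R}^N$, $f\ge0$, $\sum f_a=1$; $x^{\circ-1/2}$ is entrywise $x_i^{-1/2}$. Algorithm ALG-CE with budget $T$ (estimates are empirical frequencies/means). Phase 1 ($T/3$ rounds): $T/6$ rounds of $do()$ at state $0$, giving estimates of $q^0_j$, $\widehat m_0$, $\mathcal{I}_{m_0}$, and $\widehat P_{(a,i)}$ for $a\notin\mathcal{I}_{m_0}$ (frequency of reaching $i$ among rounds whose $X^0$-values agree with $a$); then each $a\in\mathcal{I}_{m_0}$ is performed $T/(6|\mathcal{I}_{m_0}|)$ times to get $\widehat P_{(a,i)}$. Phase 2: $\tilde f\in\arg\max_f\min_i(\widehat P^\top f)_i$. Phase 3 ($T/3$ rounds): each $a\in\mathcal{I}_0$ performed $\frac12(\tilde f(a)+\frac1N)\frac T3$ times with $do()$ at the reached state, giving $\widehat m_i$, $\widehat M=\mathrm{diag}(\widehat m_1,\dots,\widehat m_k)$. Phase 4: $\widehat f^*\in\arg\min_f\|\widehat P\widehat M^{1/2}(\widehat P^\top f)^{\circ-1/2}\|_\infty$. Phase 5 ($T/3$ rounds): with $h(a)=\frac13(\widehat f^*(a)+\tilde f(a)+\frac1N)$, each $a$ performed $h(a)T/6$ times with $do()$ at the reached state (estimating $\mathcal{I}_{m_i}$ and $\widehat{\mathcal{R}}_{(b,i)}$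 for $b\notin\mathcal{I}_{m_i}$ from rounds whose $X^i$-values agree with $b$), then $h(a)T/6$ times with round-robin over $b\in\mathcal{I}_{m_i}$ at the reached state $i$ (estimating $\widehat{\mathcal{R}}_{(b,i)}$ for $b\in\mathcal{I}_{m_i}$). Output $\widehat\pi(i)\in\arg\max_b\widehat{\mathcal{R}}_{(b,i)}$, $\widehat\pi(0)\in\arg\max_a\sum_i\widehat P_{(a,i)}\widehat{\mathcal{R}}_{(\widehat\pi(i),i)}$. Good event $E=E_1\cap\dots\cap E_5$: ($E_1$) for every $a\in\mathcal{I}_0$, the transition estimates formed in each of Phases 1, 3, 5 satisfy $\sum_i|\widehat P_{(a,i)}-P_{(a,i)}|\le p_+/3$; ($E_2$) $\widehat m_0\in[\frac23m_0,2m_0]$; ($E_3$) $\widehat m_i\in[\frac23m_i,2m_i]$ for all $i\in[k]$ (for the estimates in Phases 3 and 5); ($E_4$) for all $a\in\mathcal{I}_0$, the Phase 1 estimates satisfy $\sum_i|\widehat P_{(a,i)}-P_{(a,i)}|\le\eta'$ with $\eta'=\sqrt{\frac{150m_0}{Tp_+}\log\frac{3T}{k}}$; ($E_5$) $|\mathbb{E}[R_i\mid a]-\widehat{\mathcal{R}}_{(a,i)}|\le\widehat\eta_i$ for all $i\in[k]$, $a\in\mathcal{I}_i$, with $\widehat\eta_i=\sqrt{\frac{27\widehat m_i}{T(\widehat P^\top\widehat f^* )_i}\log(2TN)}$. Here $\widehat P$ and $\widehat M$ denote the Phase 1 and Phase 3 estimates. *)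

(* Defs.v *)
From HB Require Import structures.
From mathcomp Require Import all_boot all_order all_algebra.
From mathcomp Require Import all_classical all_reals all_analysis.
Set Implicit Arguments. Unset Strict Implicit. Unset Printing Implicit Defensive.
Import Order.TTheory GRing.Theory Num.Theory.
Local Open Scope ring_scope.

Section CausalMDP.
Variable R : realType.

(* Atomic interventions on n binary variables:
   None = do(),  Some (j, b) = do(X_j = b).  Its cardinality is N = 2n+1. *)
Definition interv (n : nat) : finType := option ('I_n * bool).

Definition assign (n : nat) : finType := {ffun 'I_n -> bool}.

Definition bern (p : R) (b : bool) : R := if b then p else 1 - p.

(* Probability of the realization x of (X_1..X_n) under intervention a, the
   variables being independent Bernoulli(q j) except the intervened one. *)
Definition iweight (n : nat) (q : 'I_n -> R) (a : interv n) (x : assign n) : R :=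
  \prod_(j < n)
    match a with
    | Some (j0, b) => if j == j0 then (if x j == b then 1 else 0) else bern (q j) (x j)
    | None => bern (q j) (x j)
    end.

(* E[R | a] when P(R = 1 | X = x) = r x. *)
Definition exp_reward (n : nat) (q : 'I_n -> R) (r : assign n -> R) (a : interv n) : R :=
  \sum_(x : assign n) iweight q a x * r x.

(* P_{(a,i)} when P(next state = i | X^0 = x) = g x i. *)
Definition trans (n k : nat) (q0 : 'I_n -> R) (g : assign n -> 'I_k -> R)
    (a : interv n) (i : 'I_k) : R :=
  \sum_(x : assign n) iweight q0 a x * g x i.

Definition qbar (p : R) : R := Num.min p (1 - p).

Definition sorted_qbar (n : nat) (q : 'I_n -> R) : seq R :=
  sort <=%R [seq qbar (q j) | j <- enum 'I_n].

(* m = max { j in [n] : qbar_(j) < 1/j }  (j is 1-based; index j0 = j - 1) *)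
Definition mpar (n : nat) (q : 'I_n -> R) : nat :=
  \max_(j0 < n | nth 0 (sorted_qbar q) j0 < (j0.+1%:R)^-1) j0.+1.

(* p_+ = min { P_{(a,i)} : P_{(a,i)} > 0 } (all entries are <= 1). *)
Definition pplus (n k : nat) (P : interv n -> 'I_k -> R) : R :=
  \big[Num.min/1]_(ai : interv n * 'I_k | 0 < P ai.1 ai.2) P ai.1 ai.2.

Definition simplex (I : finType) (f : I -> R) : Prop :=
  (forall a, 0 <= f a) /\ \sum_a f a = 1.

Definition prob01 (p : R) : Prop := 0 <= p <= 1.

Definition PTf (n k : nat) (P : interv n -> 'I_k -> R) (f : interv n -> R) (i : 'I_k) : R :=
  \sum_(a : interv n) P a i * f a.

(* || P M^{1/2} (P^T f)^{o -1/2} ||_oo  with M = diag(m_1..m_k) *)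
Definition ce_obj (n k : nat) (P : interv n -> 'I_k -> R) (m : 'I_k -> nat)
    (f : interv n -> R) : R :=
  \big[Num.max/0]_(a : interv n)
     `| \sum_(i < k) P a i * Num.sqrt (m i)%:R * (Num.sqrt (PTf P f i))^-1 |.

Definition l1dist (n k : nat) (Ph P : interv n -> 'I_k -> R) (a : interv n) : R :=
  \sum_(i < k) `| Ph a i - P a i |.

End CausalMDP.

(* Main.v *)
Require Import Defs.
From HB Require Import structures.
From mathcomp Require Import all_boot all_order all_algebra.
From mathcomp Require Import all_classical all_reals all_analysis.
From mathcomp Require Import ring lra zify.
Import Order.TTheory GRing.Theory Num.Theory.
Local Open Scope ring_scope.
Lemma iweight_ge0 (R : realType) n (q : 'I_n -> R) a x :
  (forall j, prob01 (q j)) -> 0 <= iweight q a x.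
Proof.
move=> hq; rewrite /iweight; apply: prodr_ge0 => j _.
have hb : 0 <= bern (q j) (x j).
  by have /andP[h0 h1] := hq j; rewrite /bern; case: (x j); lra.
by case: a => [[j0 b]|] //; case: (j == j0) => //; case: (x j == b).
Qed.

Lemma iweight_sum (R : realType) n (q : 'I_n -> R) a :
  \sum_(x : assign n) iweight q a x = 1.
Proof.
rewrite /iweight.
pose F := fun (j : 'I_n) (b : bool) => match a with
    | Some (j0, b0) => if j == j0 then (if b == b0 then 1 else 0) else bern (q j) b
    | None => bern (q j) b
    end : R.
have -> : \sum_(x : assign n) \prod_(j < n) F j (x j) = \prod_(j < n) \sum_(b : bool) F j b.
  by rewrite bigA_distr_bigA.
rewrite big1 // => j _; rewrite big_bool /F /bern; clear F.
case: a => [[j0 b0]|]; last by rewrite /=; lra.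
case: (j == j0); last by rewrite /=; lra.
by case: b0 => /=; rewrite ?addr0 ?add0r.
Qed.

Lemma ER_bound (R : realType) n (q : 'I_n -> R) (r : assign n -> R) b :
  (forall j, prob01 (q j)) -> (forall x, prob01 (r x)) ->
  `| exp_reward q r b | <= 1.
Proof.
move=> hq hr; rewrite /exp_reward.
have h0 : 0 <= \sum_x iweight q b x * r x.
  apply: sumr_ge0 => x _; apply: mulr_ge0; first exact: iweight_ge0.
  by have /andP[] := hr x.
rewrite ger0_norm //.
rewrite -(iweight_sum _ _ q b); apply: ler_sum => x _.
rewrite -[X in _ <= X]mulr1; apply: ler_wpM2l; first exact: iweight_ge0.
by have /andP[] := hr x.
Qed.

Lemma pplus_gt0 (R : realType) n k (P : interv n -> 'I_k -> R) : 0 < pplus P.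
Proof.
rewrite /pplus; apply: (big_ind (fun x => 0 < x)) => //.
by move=> x y hx hy; rewrite lt_min hx hy.
Qed.
Theorem lemma2 (R : realType) :
  exists C : R, 0 < C /\
  forall (n k T : nat),
    (0 < n)%N -> (0 < k)%N -> (0 < T)%N ->
  (* ---- the instance ---- *)
  forall (q0 : 'I_n -> R) (g : assign n -> 'I_k -> R)
         (q : 'I_k -> 'I_n -> R) (r : 'I_k -> assign n -> R),
    (forall j, prob01 (q0 j)) ->
    (forall x, simplex (g x)) ->
    (forall i j, prob01 (q i j)) ->
    (forall i x, prob01 (r i x)) ->
  let P := trans q0 g in
  let ER := fun (i : 'I_k) (b : interv n) => exp_reward (q i) (r i) b in
  let m0 := mpar q0 in
  let m := fun i => mpar (q i) in
  let pp := pplus P in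
  let N := (2 * n + 1)%N in
  (* ---- realized outputs of ALG-CE ---- *)
  forall (q0h : 'I_n -> R)                       (* Phase 1 estimates of q^0 *)
         (Ph1 Ph3 Ph5 : interv n -> 'I_k -> R)    (* transition estimates, Phases 1,3,5 *)
         (q3h q5h : 'I_k -> 'I_n -> R)           (* estimates of q^i, Phases 3,5 *)
         (ft fs : interv n -> R)                 (* f~ and f^* *)
         (Rh : interv n -> 'I_k -> R)            (* Rhat_{(b,i)} *)
         (pi0 : interv n) (pi : 'I_k -> interv n),
    (forall j, prob01 (q0h j)) ->
    (forall i j, prob01 (q3h i j)) ->
    (forall i j, prob01 (q5h i j)) ->
    (forall a, simplex (Ph1 a)) ->
    (forall a, simplex (Ph3 a)) ->
    (forall a, simplex (Ph5 a)) ->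
    (forall b i, prob01 (Rh b i)) ->
  let m0h := mpar q0h in
  let mh := fun i => mpar (q3h i) in
  let mh5 := fun i => mpar (q5h i) in
  (* Phase 2: f~ in argmax_f min_i (Phat^T f)_i *)
    simplex ft ->
    (forall f, simplex f -> forall j, exists i, PTf Ph1 f i <= PTf Ph1 ft j) ->
  (* Phase 4: f^* in argmin_f || Phat Mhat^{1/2} (Phat^T f)^{o-1/2} ||_oo *)
    simplex fs ->
    (forall i, 0 < PTf Ph1 fs i) ->
    (forall f, simplex f -> (forall i, 0 < PTf Ph1 f i) ->
       ce_obj Ph1 mh fs <= ce_obj Ph1 mh f) ->
  (* output policy *)
    (forall i b, Rh b i <= Rh (pi i) i) ->
    (forall a, \sum_(i < k) Ph1 a i * Rh (pi i) i
               <= \sum_(i < k) Ph1 pi0 i * Rh (pi i) i) ->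
  (* ---- good event E ---- *)
  (* E1 *)
    (forall a, l1dist Ph1 P a <= pp / 3) ->
    (forall a, l1dist Ph3 P a <= pp / 3) ->
    (forall a, l1dist Ph5 P a <= pp / 3) ->
  (* E2 *)
    (2 / 3 : R) * m0%:R <= (m0h%:R : R) <= 2 * m0%:R ->
  (* E3 *)
    (forall i, (2 / 3 : R) * (m i)%:R <= ((mh i)%:R : R) <= 2 * (m i)%:R) ->
    (forall i, (2 / 3 : R) * (m i)%:R <= ((mh5 i)%:R : R) <= 2 * (m i)%:R) ->
  (* E4 *)
    (forall a, l1dist Ph1 P a <=
        Num.sqrt (150%:R * m0%:R / (T%:R * pp) * ln (3%:R * T%:R / k%:R))) ->
  (* E5 *)
    (forall i b, `| ER i b - Rh b i | <=
        Num.sqrt (27%:R * (mh i)%:R / (T%:R * PTf Ph1 fs i) * ln (2%:R * T%:R * N%:R))) ->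
  (* ---- conclusion ---- *)
  let lamh := (ce_obj Ph1 mh fs) ^+ 2 in
    \sum_(i < k) P pi0 i * ER i (pi i)
      >= \sum_(i < k) Ph1 pi0 i * Rh (pi i) i
         - C * Num.sqrt (Num.max lamh (m0%:R / pp) * ln (N%:R * T%:R) / T%:R).
Proof.
exists 26; split; first by [].
move=> n k T hn hk hT q0 g q r hq0 hg hq hr P ER m0 m pp N q0h Ph1 Ph3 Ph5
  q3h q5h ft fs Rh pi0 pi hq0h hq3 hq5 hPh1 hPh3 hPh5 hRh m0h mh mh5 hft hftopt
  hfs hPTf hfsopt hpi hpi0 E1a E1b E1c E2 E3 E3b E4 E5.
cbv zeta; set lamh := ce_obj Ph1 mh fs ^+ 2.
set L := ln (N%:R * T%:R : R).
set M := Num.max lamh (m0%:R / pp).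
set Y := M * L / T%:R.
have hTr : (1 : R) <= T%:R by rewrite ler1n.
have hkr : (1 : R) <= k%:R by rewrite ler1n.
have hNr : (3 : R) <= N%:R by rewrite ler_nat /N; lia.
have hpp : 0 < pp := pplus_gt0 _ _ _ P.
have hA : 0 <= m0%:R / pp by rewrite divr_ge0 // ltW.
have hL : 0 <= L by apply: ln_ge0; nra.
have hAM : m0%:R / pp <= M by rewrite le_max lexx orbT.
have hlM : lamh <= M by rewrite le_max lexx.
have hM : 0 <= M by apply: le_trans hAM.
have hTi : 0 < (T%:R : R)^-1 by rewrite invr_gt0; lra.
have hY : 0 <= Y by rewrite /Y !mulr_ge0 // ltW.
have s169 : forall x : R, 0 <= x -> Num.sqrt (169 * x) = 13 * Num.sqrt x.
  move=> x hx; rewrite sqrtrM; last by [].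
  have -> : (169 : R) = 13 ^+ 2 by rewrite expr2; lra.
  by rewrite sqrtr_sqr ger0_norm.
have C1 : - (13 * Num.sqrt Y) <= \sum_(i < k) (P pi0 i - Ph1 pi0 i) * ER i (pi i).
  apply: (@le_trans _ _ (- l1dist Ph1 P pi0)).
    rewrite lerN2; apply: (le_trans (E4 pi0)); rewrite -s169 //.
    rewrite ler_sqrt; last by rewrite mulr_ge0.
    have hl : ln (3%:R * T%:R / k%:R : R) <= L.
      have h3 : 0 < (3%:R * T%:R / k%:R : R) by rewrite divr_gt0 //; nra.
      rewrite ler_ln ?posrE //; last by nra.
      rewrite ler_pdivrMr; last by lra.
      have e1 : (3%:R : R) * T%:R <= N%:R * T%:R by rewrite ler_wpM2r //; lra.
      have e2 : (N%:R : R) * T%:R <= N%:R * T%:R * k%:R.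
        rewrite -[X in X <= _]mulr1 ler_wpM2l //; nra.
      exact: le_trans e2.
    have -> : 150%:R * m0%:R / (T%:R * pp) * ln (3%:R * T%:R / k%:R) =
       150 * ((m0%:R / pp) * ln (3%:R * T%:R / k%:R : R)) * (T%:R : R)^-1.
      rewrite invfM; ring.
    rewrite /Y /=.
    have h1 : (m0%:R / pp) * ln (3%:R * T%:R / k%:R : R) <= M * L.
      apply: (@le_trans _ _ ((m0%:R / pp) * L)); first by rewrite ler_wpM2l.
      by rewrite ler_wpM2r.
    have h2 : 0 <= M * L by rewrite mulr_ge0.
    have -> : 169 * (M * L / T%:R) = (169 * (M * L)) * (T%:R : R)^-1 by ring.
    apply: ler_wpM2r; first exact: ltW.
    nra.
  rewrite /l1dist -sumrN; apply: ler_sum => i _.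
  have hE : `| ER i (pi i) | <= 1 by apply: ER_bound.
  have : `|(P pi0 i - Ph1 pi0 i) * ER i (pi i)| <= `|Ph1 pi0 i - P pi0 i|.
    rewrite normrM distrC -[X in _ <= X]mulr1; apply: ler_wpM2l => //.
  by rewrite ler_norml => /andP[].
set c := Num.sqrt (27%:R * ln (2%:R * T%:R * N%:R : R) / T%:R).
set S := \sum_(i < k) Ph1 pi0 i * Num.sqrt (mh i)%:R * (Num.sqrt (PTf Ph1 fs i))^-1.
have hL2 : ln (2%:R * T%:R * N%:R : R) <= 2 * L.
  have -> : 2 * L = L *+ 2 by rewrite mulr2n; ring.
  rewrite /L -lnXn; last by nra.
  have hNT : (3 : R) <= N%:R * T%:R by nra.
  rewrite expr2 ler_ln ?posrE; [nra | nra | nra].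
have hL2' : 0 <= 27%:R * ln (2%:R * T%:R * N%:R : R) / T%:R.
  have hl2 : 0 <= ln (2%:R * T%:R * N%:R : R) by apply: ln_ge0; nra.
  apply: mulr_ge0; last by apply: ltW; rewrite invr_gt0; lra.
  by apply: mulr_ge0.
have C2a : - (c * S) <= \sum_(i < k) Ph1 pi0 i * (ER i (pi i) - Rh (pi i) i).
  rewrite /S mulr_sumr -sumrN; apply: ler_sum => i _.
  have hPi : 0 <= Ph1 pi0 i by have [] := hPh1 pi0.
  have heta := E5 i (pi i).
  have eqh : 27%:R * (mh i)%:R / (T%:R * PTf Ph1 fs i) * ln (2%:R * T%:R * N%:R : R)
     = (27%:R * ln (2%:R * T%:R * N%:R : R) / T%:R) * ((mh i)%:R * (PTf Ph1 fs i)^-1).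
    rewrite invfM; ring.
  rewrite eqh in heta.
  rewrite (sqrtrM _ hL2') (sqrtrM _ (ler0n _ (mh i))) (sqrtrV (ltW (hPTf i))) in heta.
  have : `|Ph1 pi0 i * (ER i (pi i) - Rh (pi i) i)| <=
      c * (Ph1 pi0 i * Num.sqrt (mh i)%:R * (Num.sqrt (PTf Ph1 fs i))^-1).
    rewrite normrM ger0_norm //.
    have -> : c * (Ph1 pi0 i * Num.sqrt (mh i)%:R * (Num.sqrt (PTf Ph1 fs i))^-1)
       = Ph1 pi0 i * (c * (Num.sqrt (mh i)%:R * (Num.sqrt (PTf Ph1 fs i))^-1)) by ring.
    by apply: ler_wpM2l.
  by rewrite ler_norml => /andP[].
have hSce : S <= ce_obj Ph1 mh fs.
  apply: (le_trans (ler_norm S)); rewrite /ce_obj.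
  exact: (le_bigmax 0 (fun a => `| \sum_(i < k) Ph1 a i * Num.sqrt (mh i)%:R * (Num.sqrt (PTf Ph1 fs i))^-1 |) pi0).
have hce : 0 <= ce_obj Ph1 mh fs.
  rewrite /ce_obj; apply: (big_ind (fun x => 0 <= x)) => //.
  by move=> x y hx hy; rewrite le_max hx.
have C2 : c * S <= 13 * Num.sqrt Y.
  apply: (@le_trans _ _ (c * ce_obj Ph1 mh fs)); first by rewrite ler_wpM2l ?sqrtr_ge0.
  rewrite -s169 // /c -(ger0_norm hce) -sqrtr_sqr -sqrtrM //.
  rewrite ler_sqrt; last by rewrite mulr_ge0.
  rewrite /Y -/lamh.
  have hlam : 0 <= lamh by rewrite /lamh sqr_ge0.
  have -> : 27%:R * ln (2%:R * T%:R * N%:R : R) / T%:R * lamh =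
      (27%:R * ln (2%:R * T%:R * N%:R : R) * lamh) * (T%:R : R)^-1 by ring.
  have -> : 169 * (M * L / T%:R) = (169 * (M * L)) * (T%:R : R)^-1 by ring.
  apply: ler_wpM2r; first exact: ltW.
  have hl2 : 0 <= ln (2%:R * T%:R * N%:R : R) by apply: ln_ge0; nra.
  nra.
have dec : \sum_(i < k) P pi0 i * ER i (pi i) - \sum_(i < k) Ph1 pi0 i * Rh (pi i) i =
  \sum_(i < k) (P pi0 i - Ph1 pi0 i) * ER i (pi i) +
  \sum_(i < k) Ph1 pi0 i * (ER i (pi i) - Rh (pi i) i).
  rewrite -sumrB -big_split /=; apply: eq_bigr => i _; ring.
rewrite /Y /M in C1 C2 dec *.
lra.
Qed.
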